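(* Every admissible Novikov algebra is an anti-pre-Lie algebra.
   Context: All vector spaces are finite-dimensional over a field $\mathbb F$ of characteristic $0$. For a bilinear operation $\circ$ on $A$ write $[x,y]=x\circ y-y\circ x$. An anti-pre-Lie algebra is $(A,\circ)$ such that for all $x,y,z$: (i) $x\circ(y\circ z)-y\circ(x\circ z)=[y,x]\circ z$, and (ii) $[x,y]\circ z+[y,z]\circ x+[z,x]\circ y=0$. An admissible Novikov algebra is $(A,\circ)$ satisfying (i) and $2x\circ[y,z]=(x\circ y)\circ z-(x\circ z)\circ y$ for all $x,y,z\in A$. *)

(* Defs.v *)
From HB Require Import structures.
From mathcomp Require Import all_boot all_order all_algebra.
Set Implicit Arguments. Unset Strict Implicit. Unset Printing Implicit Defensive.
Import GRing.Theory.
Local Open Scope ring_scope.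

Definition bilinear_op (F : fieldType) (A : vectType F) (op : A -> A -> A) : Prop :=
  (forall (a : F) (x y z : A), op (a *: x + y) z = a *: op x z + op y z) /\
  (forall (a : F) (x y z : A), op x (a *: y + z) = a *: op x y + op x z).

Definition comm_op (F : fieldType) (A : vectType F) (op : A -> A -> A) (x y : A) : A :=
  op x y - op y x.

Definition anti_pre_Lie_i (F : fieldType) (A : vectType F) (op : A -> A -> A) : Prop :=
  forall x y z : A, op x (op y z) - op y (op x z) = op (comm_op op y x) z.

Definition is_anti_pre_Lie (F : fieldType) (A : vectType F) (op : A -> A -> A) : Prop :=
  anti_pre_Lie_i op /\
  forall x y z : A,
    op (comm_op op x y) z + op (comm_op op y z) x + op (comm_op op z x) y = 0.

Definition is_admissible_Novikov (F : fieldType) (A : vectType F) (op : A -> A -> A) : Prop :=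
  anti_pre_Lie_i op /\
  forall x y z : A, 2%:R *: op x (comm_op op y z) = op (op x y) z - op (op x z) y.

(* Main.v *)
Require Import Defs.
From HB Require Import structures.
From mathcomp Require Import all_boot all_order all_algebra.
Local Open Scope ring_scope.
Import GRing.Theory.
Lemma L0 (V : zmodType) (a b c d e f : V) :
  (a - b) + (c - d) + (e - f) = (a + c + e) - (b + d + f).
Proof.
have H : forall x y z w : V, (x - y) + (z - w) = (x + z) - (y + w).
  by move=> x y z w; rewrite addrACA opprD.
by rewrite !H.
Qed.
Lemma L1 (V : zmodType) (a b c d e f : V) :
  (a - b) + (c - d) + (e - f) = (a - d) + (c - f) + (e - b).
Proof.
by rewrite !L0 [d + f + b]addrC addrA.
Qed.

Theorem proposition3p3 (F : fieldType) (A : vectType F) (op : A -> A -> A) :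
  [pchar F] =i pred0 ->
  bilinear_op op ->
  is_admissible_Novikov op ->
  is_anti_pre_Lie op.
Proof.
move=> hch [hl hr] [hi hn]; split => // x y z.
have subl : forall u v w, op (u - v) w = op u w - op v w.
  move=> u v w; have := hl (-1) v u w.
  by rewrite scaleN1r addrC => ->; rewrite scaleN1r addrC.
have subr : forall u v w, op w (u - v) = op w u - op w v.
  move=> u v w; have := hr (-1) w v u.
  by rewrite scaleN1r addrC => ->; rewrite scaleN1r addrC.
set S := _ + _ + _.
set T := op x (comm_op op y z) + op y (comm_op op z x) + op z (comm_op op x y).
have e1 : 2%:R *: T = S.
  by rewrite /T !scalerDr !hn /S /comm_op !subl L1.
have e2 : T = - S.
  rewrite /T /comm_op !subr L1 -!/(comm_op _ _ _).
  rewrite (hi x y z) (hi y z x) (hi z x y) /S /comm_op !subl !opprD !opprK.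
  by rewrite !(addrC (- _)).
have h3 : (3%:R : F) != 0.
  apply/negP => h; have := hch 3%N; rewrite !inE /= h.
  by [].
move: e1; rewrite e2 scalerN => /eqP; rewrite eq_sym -subr_eq0 opprK.
rewrite -{1}(scale1r S) -scalerDl => /eqP /eqP.
rewrite scaler_eq0 => /orP [|/eqP //].
by rewrite -(natrD F 1 2) (negbTE h3).
Qed.
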